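(* Let $\mathcal{X}$, $p_{\mathrm{data}}$, $p_{\mathrm{pos}}$ be as in the context, let $\mathcal{F}$ be a class of functions $\mathcal{X}\to\mathbb{R}^k$ with $k=m$, and for $\lambda>0$ let $\mathcal{L}_\lambda(f)=\mathbb{E}_{(x,x^+)\sim p_{\mathrm{pos}}}[\|f(x)-f(x^+)\|_2^2]+\lambda\|\mathbb{E}_{x\sim p_{\mathrm{data}}}[f(x)f(x)^\top]-\mathbb{I}\|_F^2$. Let $\phi\ge 0$ and suppose $f_{\mathrm{eig}}:\mathcal{X}\to\mathbb{R}^m$, $f_{\mathrm{eig}}\in\mathcal{F}$, satisfies $$\mathbb{E}_{(x,x^+)\sim p_{\mathrm{pos}}}\big[\|f_{\mathrm{eig}}(x)-f_{\mathrm{eig}}(x^+)\|_2^2\big]\le\phi,\qquad \mathbb{E}_{x\sim p_{\mathrm{data}}}[f_{\mathrm{eig}}(x)f_{\mathrm{eig}}(x)^\top]=\mathbb{I}.$$ Assume: (A) (with parameters $\tilde\phi,\epsilon$) for every $g:\mathcal{X}\to\mathbb{R}$ of the form $g(x)=f(x)_i$ with $f\in\mathcal{F}$, $i\in[k]$, satisfying $\mathbb{E}_{(x,x^+)\sim p_{\mathrm{pos}}}[(g(x)-g(x^+))^2]\le\tilde\phi\,\mathbb{E}_{x\sim p_{\mathrm{data}}}[g(x)^2]$, there exists $\tilde w\in\mathbb{R}^m$ with $\mathbb{E}_{x\sim p_{\mathrm{data}}}[(\tilde w^\top f_{\mathrm{eig}}(x)-g(x))^2]\le\epsilon$; (B)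 (with parameters $B,\zeta$) for the downstream label vector $\vec y(x)\in\mathbb{R}^r$ there exists $W^*\in\mathbb{R}^{r\times m}$ with $\|W^*\|_F\le B$ and $\mathbb{E}_{x\sim p_{\mathrm{data}}}[\|W^*f_{\mathrm{eig}}(x)-\vec y(x)\|_2^2]\le\zeta$. Suppose $\tilde\phi>\phi$ or $\tilde\phi=\phi=0$. Then for any $\lambda>0$ with $\phi\le\tilde\phi\,(1-\sqrt{\phi/\lambda})$ and any $\hat f\in\arg\min_{f\in\mathcal{F}}\mathcal{L}_\lambda(f)$, there exists $W\in\mathbb{R}^{r\times k}$ with $$\mathbb{E}_{x\sim p_{\mathrm{data}}}\big[\|W\hat f(x)-\vec y(x)\|_2^2\big]\lesssim\zeta+B^2k\Big(\epsilon+\frac{\phi}{\lambda}\Big).$$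
   Context: $p_{\mathrm{pos}}$ is the distribution of positive pairs $(x,x^+)$ (two random views of the same random input) on $\mathcal{X}\times\mathcal{X}$, and $p_{\mathrm{data}}$ is the distribution of a single random view (marginal of $p_{\mathrm{pos}}$). The notation $a\lesssim b$ means $a\le Cb$ for an absolute constant $C$. *)

(* Defs.v *)
From HB Require Import structures.
From mathcomp Require Import all_boot all_order all_algebra.
From mathcomp Require Import all_classical all_reals all_analysis.
Set Implicit Arguments. Unset Strict Implicit. Unset Printing Implicit Defensive.
Import Order.TTheory GRing.Theory Num.Theory.
Import numFieldNormedType.Exports.
Local Open Scope classical_set_scope.
Local Open Scope ring_scope.

Definition Expect d (T : measurableType d) (R : realType)
  (P : probability T R) (h : T -> R) : R := Rintegral P setT h.

Definition sqnorm (R : realType) (n : nat) (v : 'cV[R]_n) : R :=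
  \sum_(i < n) v i ord0 ^+ 2.

Definition frob2 (R : realType) (p q : nat) (A : 'M[R]_(p, q)) : R :=
  \sum_(i < p) \sum_(j < q) A i j ^+ 2.

Definition covmx d (X : measurableType d) (R : realType) (m : nat)
  (P : probability X R) (f : X -> 'cV[R]_m) : 'M[R]_m :=
  \matrix_(i, j) Expect P (fun x => f x i ord0 * f x j ord0).

Definition Lloss d (X : measurableType d) (R : realType) (m : nat)
  (ppos : probability (X * X)%type R) (pdata : probability X R)
  (lam : R) (f : X -> 'cV[R]_m) : R :=
  Expect ppos (fun z => sqnorm (f z.1 - f z.2))
  + lam * frob2 (covmx pdata f - 1%:M).

Definition L2vec d (X : measurableType d) (R : realType) (n : nat)
  (pdata : probability X R) (f : X -> 'cV[R]_n) : Prop :=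
  forall i : 'I_n, measurable_fun setT (fun x => f x i ord0) /\
    pdata.-integrable setT (fun x => ((f x i ord0) ^+ 2)%:E).

(* Main.v *)
Require Import Defs.
From HB Require Import structures.
From mathcomp Require Import all_boot all_order all_algebra.
From mathcomp Require Import all_classical all_reals all_analysis.
From mathcomp Require Import measurable_realfun ring lra.
Import Order.TTheory GRing.Theory Num.Theory.
Import numFieldNormedType.Exports.
Local Open Scope classical_set_scope.
Local Open Scope ring_scope.

Set Implicit Arguments. Unset Strict Implicit. Unset Printing Implicit Defensive.

Section Alg.
Variable R : realType.

Lemma dsum_mul n (x y : 'I_n -> R) :
  \sum_i \sum_j x i * y j = (\sum_i x i) * (\sum_j y j).
Proof. by rewrite mulr_suml; apply: eq_bigr => i _; rewrite mulr_sumr. Qed.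

Lemma CS n (a b : 'I_n -> R) :
  (\sum_i a i * b i) ^+ 2 <= (\sum_i a i ^+ 2) * (\sum_i b i ^+ 2).
Proof.
have H : 0 <= \sum_i \sum_j (a i * b j - a j * b i) ^+ 2.
  by apply: sumr_ge0 => i _; apply: sumr_ge0 => j _; exact: sqr_ge0.
have E1 : forall i j, (a i * b j - a j * b i) ^+ 2 =
     a i ^+ 2 * b j ^+ 2 + a j ^+ 2 * b i ^+ 2 - 2 * ((a i * b i) * (a j * b j)).
  by move=> i j; ring.
have T1 := @dsum_mul n (fun i => a i ^+ 2) (fun j => b j ^+ 2).
have T2 : \sum_i \sum_j a j ^+ 2 * b i ^+ 2 = (\sum_i a i ^+ 2) * (\sum_i b i ^+ 2).
  by rewrite exchange_big /= T1.
have T3 := @dsum_mul n (fun i => a i * b i) (fun j => a j * b j).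
have E : \sum_i \sum_j (a i * b j - a j * b i) ^+ 2 =
   \sum_i \sum_j a i ^+ 2 * b j ^+ 2 + \sum_i \sum_j a j ^+ 2 * b i ^+ 2
   - 2 * \sum_i \sum_j ((a i * b i) * (a j * b j)).
  rewrite (eq_bigr (fun i => \sum_j a i ^+ 2 * b j ^+ 2 + \sum_j a j ^+ 2 * b i ^+ 2
     - 2 * \sum_j ((a i * b i) * (a j * b j)))); last first.
    move=> i _; rewrite (eq_bigr _ (fun j _ => E1 i j)).
    by rewrite sumrB big_split /= !mulr_sumr.
  by rewrite sumrB big_split /= [in RHS]mulr_sumr.
rewrite E T1 T2 T3 -expr2 in H.
lra.
Qed.

Lemma sqnorm_ge0 n (v : 'cV[R]_n) : 0 <= sqnorm v.
Proof. by apply: sumr_ge0 => i _; exact: sqr_ge0. Qed.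

Lemma sqnorm_entry n (v : 'cV[R]_n) i : v i ord0 ^+ 2 <= sqnorm v.
Proof.
rewrite /sqnorm (bigD1 i) //= lerDl.
by apply: sumr_ge0 => j _; exact: sqr_ge0.
Qed.

Lemma frob2_ge0 p q (A : 'M[R]_(p, q)) : 0 <= frob2 A.
Proof. by apply: sumr_ge0 => i _; apply: sumr_ge0 => j _; exact: sqr_ge0. Qed.

Lemma frob2_entry p q (A : 'M[R]_(p, q)) i j : A i j ^+ 2 <= frob2 A.
Proof.
rewrite /frob2 (bigD1 i) //= (bigD1 j) //= -addrA lerDl.
apply: addr_ge0; first by apply: sumr_ge0 => k _; exact: sqr_ge0.
by apply: sumr_ge0 => k _; apply: sumr_ge0 => l _; exact: sqr_ge0.
Qed.

Lemma sqnorm_add n (u a b : 'cV[R]_n) :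
  (forall i, u i ord0 = a i ord0 + b i ord0) ->
  sqnorm u <= 2 * sqnorm a + 2 * sqnorm b.
Proof.
move=> e; rewrite /sqnorm !mulr_sumr -big_split /=.
apply: ler_sum => i _; rewrite e.
have := sqr_ge0 (a i ord0 - b i ord0); nra.
Qed.

Lemma sqnorm_mul p n (W : 'M[R]_(p, n)) (e : 'cV[R]_n) :
  sqnorm (W *m e) <= frob2 W * sqnorm e.
Proof.
rewrite /sqnorm /frob2 mulr_suml; apply: ler_sum => k _.
rewrite mxE; exact: CS.
Qed.

Lemma unit_of_lb n (G : 'M[R]_n) c :
  (forall v : 'cV[R]_n, sqnorm v <= c * sqnorm (G^T *m v)) -> G \in unitmx.
Proof.
move=> H; rewrite -row_free_unit -kermx_eq0; apply/eqP/row_matrixP => i.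
rewrite row0; set u := row i (kermx G).
have uG : u *m G = 0 by rewrite /u -row_mul mulmx_ker row0.
have v0 : sqnorm u^T <= 0.
  have := H u^T; rewrite -trmx_mul uG trmx0.
  rewrite (_ : sqnorm (0 : 'cV[R]_n) = 0) ?mulr0 //.
  by rewrite /sqnorm big1 // => k _; rewrite mxE expr2 mulr0.
apply/rowP => j; rewrite mxE.
have := sqnorm_entry u^T j; rewrite mxE => h.
have : u 0 j ^+ 2 <= 0 by apply: le_trans h v0.
rewrite /u !mxE => h0; nra.
Qed.

Lemma frob2_inv_lb m r (G : 'M[R]_m) (Ws : 'M[R]_(r, m)) c :
  (forall v : 'cV[R]_m, sqnorm v <= c * sqnorm (G^T *m v)) -> G \in unitmx ->
  frob2 (Ws *m invmx G) <= c * frob2 Ws.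
Proof.
move=> H uG.
have -> : frob2 (Ws *m invmx G) = \sum_k sqnorm ((invmx G)^T *m (row k Ws)^T).
  rewrite /frob2; apply: eq_bigr => k _; apply: eq_bigr => j _.
  rewrite !mxE; congr (_ ^+ 2); apply: eq_bigr => i _; rewrite !mxE mulrC.
  by [].
rewrite /frob2 mulr_sumr; apply: ler_sum => k _.
apply: le_trans (H _) _.
rewrite mulmxA -trmx_mul mulVmx // trmx1 mul1mx /sqnorm.
rewrite le_eqVlt; apply/orP; left; apply/eqP; congr (_ * _).
by apply: eq_bigr => j _; rewrite !mxE.
Qed.

End Alg.

Section Integ.
Context d (X : measurableType d) (R : realType) (P : probability X R).
Implicit Types (h k g : X -> R).

Definition Int (h : X -> R) := P.-integrable setT (EFin \o h).
Definition L2 (h : X -> R) := measurable_fun setT h /\ Int (fun x => h x ^+ 2).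

Lemma Int_ext h k : (forall x, h x = k x) -> Int h -> Int k.
Proof. by move=> e; rewrite (_ : k = h) //; apply/funext => x; rewrite e. Qed.

Lemma L2_ext h k : (forall x, h x = k x) -> L2 h -> L2 k.
Proof. by move=> e; rewrite (_ : k = h) //; apply/funext => x; rewrite e. Qed.

Lemma Int_meas h : Int h -> measurable_fun setT h.
Proof. by case/integrableP => /measurable_EFinP. Qed.

Lemma Int_le h g : measurable_fun setT h -> Int g ->
  (forall x, `|h x| <= g x) -> Int h.
Proof.
move=> mh ig hg; apply: le_integrable ig => //.
  exact/measurable_EFinP.
move=> x _ /=; rewrite lee_fin (le_trans (hg x)) //.
exact: real_ler_norm (num_real _).
Qed.

Lemma IntD h k : Int h -> Int k -> Int (fun x => h x + k x).
Proof. by move=> ih ik; have := integrableD measurableT ih ik. Qed.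

Lemma IntZ c h : Int h -> Int (fun x => c * h x).
Proof. by move=> ih; have := integrableZl measurableT c ih. Qed.

Lemma IntN h : Int h -> Int (fun x => - h x).
Proof. by move=> ih; apply: Int_ext (IntZ (-1) ih) => x; rewrite mulN1r. Qed.

Lemma IntB h k : Int h -> Int k -> Int (fun x => h x - k x).
Proof. by move=> ih ik; exact: IntD ih (IntN ik). Qed.

Lemma Int_cst c : Int (fun _ => c).
Proof.
apply/integrableP; split; first exact/measurable_EFinP/measurable_cst.
by rewrite integral_cst //= probability_setT mule1 ltry.

Qed.

Lemma Int_sum (I : Type) (s : seq I) (F : I -> X -> R) :
  (forall i, Int (F i)) -> Int (fun x => \sum_(i <- s) F i x).
Proof.
move=> iF; elim: s => [|i s ih].
  by apply: Int_ext (Int_cst 0) => x; rewrite big_nil.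
by apply: Int_ext (IntD (iF i) ih) => x; rewrite big_cons.
Qed.

Lemma L2_Int_mul h k : L2 h -> L2 k -> Int (fun x => h x * k x).
Proof.
move=> [mh ih] [mk ik]; apply: (Int_le _ (IntD ih ik)) => //.
  exact: measurable_funM.
move=> x; rewrite normrM.
have := sqr_ge0 (`|h x| - `|k x|).
have := normr_ge0 (h x); have := normr_ge0 (k x).
rewrite -(real_normK (num_real (h x))) -(real_normK (num_real (k x))).
nra.
Qed.

Lemma L2D h k : L2 h -> L2 k -> L2 (fun x => h x + k x).
Proof.
move=> Lh Lk; have [mh ih] := Lh; have [mk ik] := Lk; split.
  exact: measurable_funD.
apply: Int_ext (IntD (IntD ih ik) (IntZ 2 (L2_Int_mul Lh Lk))) => x.
ring.
Qed.

Lemma L2Z c h : L2 h -> L2 (fun x => c * h x).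
Proof.
move=> [mh ih]; split.
  exact: measurable_funM (measurable_cst c) mh.
by apply: Int_ext (IntZ (c ^+ 2) ih) => x; ring.
Qed.

Lemma L2_cst c : L2 (fun _ => c).
Proof. by split; [exact: measurable_cst | exact: Int_cst]. Qed.

Lemma L2B h k : L2 h -> L2 k -> L2 (fun x => h x - k x).
Proof.
move=> Lh Lk; apply: L2_ext (L2D Lh (L2Z (-1) Lk)) => x; ring.
Qed.

Lemma L2_sum (I : Type) (s : seq I) (F : I -> X -> R) :
  (forall i, L2 (F i)) -> L2 (fun x => \sum_(i <- s) F i x).
Proof.
move=> iF; elim: s => [|i s ih].
  by apply: L2_ext (L2_cst 0) => x; rewrite big_nil.
by apply: L2_ext (L2D (iF i) ih) => x; rewrite big_cons.
Qed.

Lemma L2_Int_sq h : L2 h -> Int (fun x => h x ^+ 2).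
Proof. by case. Qed.

Lemma ExpD h k : Int h -> Int k ->
  Expect P (fun x => h x + k x) = Expect P h + Expect P k.
Proof. by move=> ih ik; rewrite /Expect RintegralD. Qed.

Lemma ExpZ c h : Int h -> Expect P (fun x => c * h x) = c * Expect P h.
Proof. by move=> ih; rewrite /Expect RintegralZl. Qed.

Lemma Exp_sum (I : Type) (s : seq I) (F : I -> X -> R) :
  (forall i, Int (F i)) ->
  Expect P (fun x => \sum_(i <- s) F i x) = \sum_(i <- s) Expect P (F i).
Proof.
move=> iF; elim: s => [|i s ih].
  rewrite big_nil (_ : (fun x => _) = (fun _ => 0)); last first.
    by apply/funext => x; rewrite big_nil.
  by rewrite /Expect Rintegral_cst // mul0r.
rewrite big_cons -ih -ExpD //; last exact: Int_sum.
by congr Expect; apply/funext => x; rewrite big_cons.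
Qed.

Lemma Exp_le h k : Int h -> Int k -> (forall x, h x <= k x) ->
  Expect P h <= Expect P k.
Proof. by move=> ih ik hk; rewrite /Expect le_Rintegral. Qed.

Lemma Exp_ge0 h : (forall x, 0 <= h x) -> 0 <= Expect P h.
Proof. by move=> h0; rewrite /Expect Rintegral_ge0. Qed.

Lemma Exp_quad n (v : 'I_n -> R) (h : 'I_n -> X -> R) :
  (forall i, L2 (h i)) ->
  Expect P (fun x => (\sum_i v i * h i x) ^+ 2) =
  \sum_i \sum_j v i * v j * Expect P (fun x => h i x * h j x).
Proof.
move=> Lh.
have -> : (fun x => (\sum_i v i * h i x) ^+ 2) =
    (fun x => \sum_i \sum_j v i * v j * (h i x * h j x)).
  apply/funext => x; rewrite expr2 mulr_suml; apply: eq_bigr => i _.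
  rewrite mulr_sumr; apply: eq_bigr => j _; ring.
rewrite Exp_sum; last first.
  by move=> i; apply: Int_sum => j; apply: IntZ; exact: L2_Int_mul.
apply: eq_bigr => i _; rewrite Exp_sum; last first.
  by move=> j; apply: IntZ; exact: L2_Int_mul.
apply: eq_bigr => j _; rewrite ExpZ //; exact: L2_Int_mul.
Qed.

End Integ.

Section Transfer.
Context d (X : measurableType d) (R : realType)
  (ppos : probability (X * X)%type R) (pdata : probability X R).
Hypothesis Hm : forall A : set X, measurable A ->
       ppos (fst @^-1` A) = pdata A /\ ppos (snd @^-1` A) = pdata A.

Lemma transfer_gen (p : X * X -> X) (mp : measurable_fun setT p)
  (Hp : forall A, measurable A -> ppos (p @^-1` A) = pdata A) (h : X -> R) :
  L2 pdata h -> L2 ppos (fun z => h (p z)).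
Proof.
move=> [mh ih]; split.
  exact: measurableT_comp mh mp.
apply/integrableP; split.
  apply/measurable_EFinP; apply: measurable_funX; exact: measurableT_comp mh mp.
case/integrableP: ih => _ ih.
rewrite (_ : (\int[ppos]_(x in setT) _)%E =
   (\int[ppos]_(x in p @^-1` setT) ((fun y => `|((h y) ^+ 2)%:E|%E) \o p) x)%E); last first.
  by rewrite preimage_setT.
rewrite -ge0_integral_pushforward //; last first.
  by apply: measurableT_comp => //; apply/measurable_EFinP; exact: measurable_funX.
rewrite (eq_measure_integral pdata) //.
by move=> A mA _; exact: Hp.
Qed.


End Transfer.

Lemma sum_id (R : realType) n (c : 'I_n -> R) i :
  \sum_j c j * (1%:M : 'M[R]_n) i j = c i.
Proof.
rewrite (bigD1 i) //= mxE eqxx mulr1 big1 ?addr0 // => j nj.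
by rewrite mxE eq_sym (negbTE nj) mulr0.
Qed.

Lemma sqnormN (R : realType) n (v : 'cV[R]_n) : sqnorm (- v) = sqnorm v.
Proof. by apply: eq_bigr => i _; rewrite mxE sqrrN. Qed.

Section H.
Context d (X : measurableType d) (R : realType) (P : probability X R).

Lemma Int_sqnorm n (u : X -> 'cV[R]_n) :
  (forall k, L2 P (fun x => u x k ord0)) -> Int P (fun x => sqnorm (u x)).
Proof.
move=> Lu; apply: Int_ext (Int_sum (P:=P) (index_enum 'I_n)
  (F := fun k x => u x k ord0 ^+ 2) (fun k => L2_Int_sq (Lu k))) => x.
by [].
Qed.

Lemma L2_lin p n (W : 'M[R]_(p, n)) (f : X -> 'cV[R]_n) (y : X -> 'cV[R]_p) :
  L2vec P f -> L2vec P y -> forall k, L2 P (fun x => (W *m f x - y x) k ord0).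
Proof.
move=> Lf Ly k.
apply: L2_ext (L2B (L2_sum (index_enum 'I_n)
   (F := fun j x => W k j * f x j ord0) (fun j => L2Z _ (Lf j))) (Ly k)) => x.
by rewrite !mxE.
Qed.

Lemma L2_mul p n (W : 'M[R]_(p, n)) (f : X -> 'cV[R]_n) :
  L2vec P f -> forall k, L2 P (fun x => (W *m f x) k ord0).
Proof.
move=> Lf k.
apply: L2_ext (L2_sum (index_enum 'I_n)
   (F := fun j x => W k j * f x j ord0) (fun j => L2Z _ (Lf j))) => x.
by rewrite !mxE.
Qed.
End H.

Lemma ppos_coord d (X : measurableType d) (R : realType)
  (ppos : probability (X * X)%type R) (pdata : probability X R) n
  (f : X -> 'cV[R]_n) :
  (forall A : set X, measurable A ->
     ppos (fst @^-1` A) = pdata A /\ ppos (snd @^-1` A) = pdata A) ->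
  L2vec pdata f ->
  forall i, Expect ppos (fun z => (f z.1 i ord0 - f z.2 i ord0) ^+ 2)
     <= Expect ppos (fun z => sqnorm (f z.1 - f z.2)).
Proof.
move=> Hm Lf.
have L i : L2 ppos (fun z : X * X => f z.1 i ord0 - f z.2 i ord0).
  apply: L2B.
  - apply: (@transfer_gen _ _ _ ppos pdata fst measurable_fst _ (fun x => f x i ord0)).
      by move=> A mA; case: (Hm A mA).
    exact: Lf i.
  - apply: (@transfer_gen _ _ _ ppos pdata snd measurable_snd _ (fun x => f x i ord0)).
      by move=> A mA; case: (Hm A mA).
    exact: Lf i.
move=> i.
have -> : (fun z => sqnorm (f z.1 - f z.2)) =
    (fun z => \sum_j (f z.1 j ord0 - f z.2 j ord0) ^+ 2).
  by apply/funext => z; rewrite /sqnorm; apply: eq_bigr => j _; rewrite !mxE.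
apply: Exp_le.
- exact: L2_Int_sq.
- by apply: Int_sum => j; exact: L2_Int_sq.
- move=> z; rewrite (bigD1 i) //= lerDl.
  by apply: sumr_ge0 => j _; exact: sqr_ge0.
Qed.

Unset Implicit Arguments. Set Strict Implicit.

Theorem theorem2 (R : realType) :
  exists C : R, 0 < C /\
  forall (d : measure_display) (X : measurableType d)
    (ppos : probability (X * X)%type R) (pdata : probability X R)
    (m r : nat) (F : set (X -> 'cV[R]_m))
    (feig : X -> 'cV[R]_m) (y : X -> 'cV[R]_r)
    (phi phit eps B zeta lam : R) (fhat : X -> 'cV[R]_m),
    (forall A : set X, measurable A ->
       ppos (fst @^-1` A) = pdata A /\ ppos (snd @^-1` A) = pdata A) ->
    (forall f, F f -> L2vec pdata f) ->
    L2vec pdata y ->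
    0 <= phi ->
    F feig ->
    Expect ppos (fun z => sqnorm (feig z.1 - feig z.2)) <= phi ->
    covmx pdata feig = 1%:M ->
    (forall f, F f -> forall i : 'I_m,
       let g := fun x => f x i ord0 in
       Expect ppos (fun z => (g z.1 - g z.2) ^+ 2)
         <= phit * Expect pdata (fun x => g x ^+ 2) ->
       exists w : 'cV[R]_m,
         Expect pdata (fun x => ((w^T *m feig x) ord0 ord0 - g x) ^+ 2) <= eps) ->
    (exists Ws : 'M[R]_(r, m),
       Num.sqrt (frob2 Ws) <= B /\
       Expect pdata (fun x => sqnorm (Ws *m feig x - y x)) <= zeta) ->
    (phi < phit \/ (phit = 0 /\ phi = 0)) ->
    0 < lam ->
    phi <= phit * (1 - Num.sqrt (phi / lam)) ->
    F fhat ->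
    (forall f, F f -> Lloss ppos pdata lam fhat <= Lloss ppos pdata lam f) ->
    exists W : 'M[R]_(r, m),
      Expect pdata (fun x => sqnorm (W *m fhat x - y x))
        <= C * (zeta + B ^+ 2 * m%:R * (eps + phi / lam)).
Proof.
exists 128; split; first by lra.
move=> d X ppos pdata m r F feig y phi phit eps B zeta lam fhat
  Hm HF Ly phi0 Ffe Hfe Cfe HA [Ws [HWs HWz]] Hphit lam0 Hcond Ffh Hmin.
have Lfe := HF _ Ffe.
have Lfh := HF _ Ffh.
have Cpfe := ppos_coord Hm Lfe.
have Cpfh := ppos_coord Hm Lfh.
have frobB : frob2 Ws <= B ^+ 2.
  have s0 := sqrtr_ge0 (frob2 Ws).
  have e := sqr_sqrtr (frob2_ge0 Ws).
  rewrite -e; move: HWs s0; set s := Num.sqrt _ => h1 h2; nra.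
have zeta0 : 0 <= zeta.
  by apply: le_trans HWz; apply: Exp_ge0 => x; exact: sqnorm_ge0.
have phit0 : 0 <= phit by case: Hphit => [|[]]; lra.
have B20 : 0 <= B ^+ 2 := sqr_ge0 B.
have covI : forall i j,
    Expect pdata (fun x => feig x i ord0 * feig x j ord0) = (1%:M : 'M[R]_m) i j.
  by move=> i j; have := congr1 (fun M : 'M[R]_m => M i j) Cfe; rewrite /= mxE.
have Qfe : forall c : 'I_m -> R,
    Expect pdata (fun x => (\sum_j c j * feig x j ord0) ^+ 2) = \sum_j c j ^+ 2.
  move=> c; rewrite (Exp_quad (P := pdata) c (h := fun j x => feig x j ord0)) //.
  apply: eq_bigr => i _.
  rewrite (eq_bigr (fun j => c i * (c j * (1%:M : 'M[R]_m) i j))); last first.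
    by move=> j _; rewrite covI mulrA.
  by rewrite -mulr_sumr sum_id expr2.
have Lfeig : Lloss ppos pdata lam feig <= phi.
  rewrite /Lloss Cfe subrr (_ : frob2 (0 : 'M[R]_m) = 0) ?mulr0 ?addr0 //.
  by rewrite /frob2 big1 // => i _; rewrite big1 // => j _; rewrite mxE expr2 mulr0.
have Lh := le_trans (Hmin _ Ffe) Lfeig.
rewrite /Lloss in Lh.
set Sf := Expect ppos _ in Lh.
set Dh := covmx pdata fhat - 1%:M in Lh.
have Sf0 : 0 <= Sf by apply: Exp_ge0 => z; exact: sqnorm_ge0.
have Fr0 := frob2_ge0 Dh.
have lF0 : 0 <= lam * frob2 Dh by apply: mulr_ge0 => //; lra.
have HD : frob2 Dh <= phi / lam by rewrite ler_pdivlMr //; lra.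
have Sfphi : Sf <= phi by lra.
have d0 : 0 <= phi / lam by apply: divr_ge0 => //; lra.
set dl := phi / lam in HD d0 Hcond *.
have covI1 : forall i, Expect pdata (fun x => feig x i ord0 ^+ 2) = 1.
  by move=> i; have := covI i i; rewrite mxE eqxx => h; exact: h.
have eps0 : (0 < m)%N -> 0 <= eps.
  move=> m0; pose i0 := Ordinal m0.
  have := HA feig Ffe i0; cbv zeta => H.
  have [w Hw] : exists w : 'cV[R]_m,
     Expect pdata (fun x => ((w^T *m feig x) ord0 ord0 - feig x i0 ord0) ^+ 2) <= eps.
    apply: H; apply: le_trans (Cpfe i0) _; apply: le_trans Hfe _.
    rewrite covI1 mulr1; case: Hphit => [|[]]; lra.
  by apply: le_trans Hw; apply: Exp_ge0 => x; exact: sqr_ge0.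
have Lres : forall (W : 'M[R]_(r, m)) (f : X -> 'cV[R]_m), L2vec pdata f ->
    Int pdata (fun x => sqnorm (W *m f x - y x)).
  by move=> W f Lf; apply: Int_sqnorm; exact: L2_lin.
have EWs : Expect pdata (fun x => sqnorm (Ws *m feig x)) = frob2 Ws.
  rewrite /sqnorm Exp_sum; last by move=> k; apply: L2_Int_sq; exact: L2_mul.
  apply: eq_bigr => k _; rewrite -Qfe; congr Expect; apply/funext => x.
  by rewrite mxE.
have case1 : (1/16 < dl \/ 1/64 < m%:R * eps) -> exists W : 'M[R]_(r, m),
      Expect pdata (fun x => sqnorm (W *m fhat x - y x))
        <= 128 * (zeta + B ^+ 2 * m%:R * (eps + dl)).
  move=> Hbad; exists 0.
  have Hpt : forall x, sqnorm (0 *m fhat x - y x) <=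
      2 * sqnorm (Ws *m feig x - y x) + 2 * sqnorm (Ws *m feig x).
    move=> x; rewrite -(sqnormN (Ws *m feig x)); apply: sqnorm_add => i.
    by rewrite mul0mx !mxE; ring.
  have E1 : Expect pdata (fun x => sqnorm (0 *m fhat x - y x)) <= 2 * zeta + 2 * frob2 Ws.
    apply: le_trans (Exp_le (Lres _ _ Lfh) _ Hpt) _.
      apply: IntD; apply: IntZ; first exact: Lres.
      by apply: Int_sqnorm; exact: L2_mul.
    rewrite ExpD; [|apply: IntZ; exact: Lres|apply: IntZ; apply: Int_sqnorm; exact: L2_mul].
    rewrite !ExpZ; [|apply: Int_sqnorm; exact: L2_mul|exact: Lres].
    by rewrite EWs; lra.
  apply: le_trans E1 _.
  have [m0|mpos] := posnP m.
    have -> : frob2 Ws = 0.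
      rewrite /frob2 big1 // => k _; rewrite big1 // => j _.
      by move: (ltn_ord j); rewrite {2}m0.
    have : 0 <= B ^+ 2 * m%:R * (eps + dl) by rewrite m0 mulr0 mul0r.
    lra.
  have M1 : 1 <= (m%:R : R) by rewrite ler1n.
  have e0 := eps0 mpos.
  have K : 1/64 <= m%:R * (eps + dl).
    rewrite mulrDr; case: Hbad => h.
      have : dl <= m%:R * dl by rewrite ler_peMl.
      have : 0 <= m%:R * eps by apply: mulr_ge0 => //; lra.
      lra.
    have : 0 <= m%:R * dl by apply: mulr_ge0 => //; lra.
    lra.
  have : B ^+ 2 * (1/64) <= B ^+ 2 * (m%:R * (eps + dl)) by apply: ler_wpM2l.
  rewrite mulrA; lra.
case: (lerP dl (1/16)) => Hd; last first.
  by apply: case1; left.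
case: (lerP (m%:R * eps) (1/64)) => He; last first.
  by apply: case1; right.
have Hcoord : forall i, exists w : 'cV[R]_m,
    Expect pdata (fun x => ((w^T *m feig x) ord0 ord0 - fhat x i ord0) ^+ 2) <= eps.
  move=> i; have := HA fhat Ffh i; cbv zeta => H; apply: H.
  apply: le_trans (Cpfh i) _; apply: le_trans Sfphi _.
  apply: le_trans Hcond _; apply: ler_wpM2l => //.
  have e : Dh i i = Expect pdata (fun x => fhat x i ord0 ^+ 2) - 1.
    by rewrite /Dh !mxE eqxx.
  have := frob2_entry Dh i i; rewrite e => h.
  have s0 := sqrtr_ge0 dl.
  have s2 := sqr_sqrtr d0.
  move: s0 s2; set sq := Num.sqrt dl; set c := Expect _ _ => s0 s2.
  have h2 : (c - 1) ^+ 2 <= sq ^+ 2 by rewrite s2; exact: le_trans h HD.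
  nra.
have [wf Hwf] := choice Hcoord.
pose G := \matrix_(i, j) wf i j ord0.
pose ei i x := fhat x i ord0 - \sum_j G i j * feig x j ord0.
have Lei : forall i, L2 pdata (ei i).
  move=> i; apply: L2B; first exact: Lfh.
  by apply: L2_sum => j; apply: L2Z; exact: Lfe.
have Hei : forall i, Expect pdata (fun x => ei i x ^+ 2) <= eps.
  move=> i; apply: le_trans (Hwf i); rewrite le_eqVlt; apply/orP; left; apply/eqP.
  congr Expect; apply/funext => x.
  have es : \sum_j G i j * feig x j ord0 = ((wf i)^T *m feig x) ord0 ord0.
    by rewrite !mxE; apply: eq_bigr => j _; rewrite !mxE.
  by rewrite /ei es -sqrrN opprB.
set Se := Expect pdata (fun x => \sum_i ei i x ^+ 2).
have IntSe : Int pdata (fun x => \sum_i ei i x ^+ 2).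
  by apply: Int_sum => i; exact: L2_Int_sq.
have HSe : Se <= m%:R * eps.
  rewrite /Se Exp_sum; last by move=> i; exact: L2_Int_sq.
  apply: le_trans (ler_sum _ (fun i _ => Hei i)) _.
  by rewrite sumr_const card_ord mulr_natl.
have Se0 : 0 <= Se by apply: Exp_ge0 => x; apply: sumr_ge0 => i _; exact: sqr_ge0.
have LB : forall v : 'cV[R]_m, sqnorm v <= 3 * sqnorm (G^T *m v).
  move=> v.
  pose u j := \sum_i v i ord0 * G i j.
  have GTv : sqnorm (G^T *m v) = \sum_j u j ^+ 2.
    rewrite /sqnorm; apply: eq_bigr => j _; rewrite !mxE; congr (_ ^+ 2).
    by apply: eq_bigr => i _; rewrite !mxE mulrC.
  rewrite GTv.
  have V0 := sqnorm_ge0 v.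
  set V := sqnorm v in V0 *.
  pose a x := \sum_i v i ord0 * fhat x i ord0.
  have La : L2 pdata a by apply: L2_sum => i; apply: L2Z; exact: Lfh.
  have Ea : Expect pdata (fun x => a x ^+ 2) =
      \sum_i \sum_j v i ord0 * v j ord0 * covmx pdata fhat i j.
    rewrite (Exp_quad (P := pdata) (fun i => v i ord0) (h := fun j x => fhat x j ord0)) //.
    by apply: eq_bigr => i _; apply: eq_bigr => j _; rewrite mxE.
  pose sv i := \sum_j v j ord0 * Dh i j.
  have Split : \sum_i \sum_j v i ord0 * v j ord0 * covmx pdata fhat i j =
      \sum_i v i ord0 * sv i + V.
    rewrite /V /sqnorm -big_split /=; apply: eq_bigr => i _.
    have e2 : v i ord0 ^+ 2 = v i ord0 * \sum_j (v j ord0 * (1%:M : 'M[R]_m) i j) by rewrite sum_id expr2.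
    rewrite e2 /sv !mulr_sumr -big_split /=.
    by apply: eq_bigr => j _; rewrite /Dh !mxE; ring.
  set t := \sum_i v i ord0 * sv i in Split.
  have t2 : t ^+ 2 <= V * (V * frob2 Dh).
    apply: le_trans (CS (fun i => v i ord0) sv) _.
    apply: ler_wpM2l => //.
    rewrite /frob2 mulr_sumr; apply: ler_sum => i _.
    exact: (CS (fun j => v j ord0) (fun j => Dh i j)).
  have VV : V * (V * frob2 Dh) <= V * (V * (1/16)).
    apply: ler_wpM2l => //; apply: ler_wpM2l => //; lra.
  have tlb : - (V / 4) <= t by nra.
  have Ealb : 3/4 * V <= Expect pdata (fun x => a x ^+ 2) by rewrite Ea Split; lra.
  have ex : forall x, a x = \sum_j u j * feig x j ord0 + \sum_i v i ord0 * ei i x.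
    move=> x; rewrite /a /u /ei.
    rewrite [in RHS](eq_bigr (fun j => \sum_i v i ord0 * G i j * feig x j ord0)); last first.
      by move=> j _; rewrite mulr_suml.
    rewrite exchange_big /= -big_split /=; apply: eq_bigr => i _.
    rewrite (eq_bigr (fun j => v i ord0 * (G i j * feig x j ord0))); last first.
      by move=> j _; rewrite mulrA.
    rewrite -mulr_sumr; ring.
  have pt : forall x, a x ^+ 2 <= 2 * (\sum_j u j * feig x j ord0) ^+ 2
      + 2 * (V * \sum_i ei i x ^+ 2).
    move=> x; rewrite ex.
    pose p := \sum_j u j * feig x j ord0.
    pose q := \sum_i v i ord0 * ei i x.
    pose S := \sum_i ei i x ^+ 2.
    have hq : q ^+ 2 <= V * S := CS (fun i => v i ord0) (fun i => ei i x).
    rewrite -/p -/q -/S.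
    have := sqr_ge0 (p - q); nra.
  have Lu : L2 pdata (fun x => \sum_j u j * feig x j ord0).
    by apply: L2_sum => j; apply: L2Z; exact: Lfe.
  have Eub := Exp_le (L2_Int_sq La)
    (IntD (IntZ 2 (L2_Int_sq Lu)) (IntZ 2 (IntZ V IntSe))) pt.
  have LuI := L2_Int_sq Lu.
  rewrite ExpD in Eub; try by repeat apply: IntZ; first [exact: IntSe | exact: LuI].
  rewrite !ExpZ in Eub; try by repeat apply: IntZ; first [exact: IntSe | exact: LuI].
  rewrite Qfe -/Se in Eub.
  have VS : V * Se <= V * (1/64) by apply: ler_wpM2l => //; lra.
  lra.
have uG := unit_of_lb LB.
have FW := frob2_inv_lb Ws LB uG.
pose W := Ws *m invmx G.
exists W.
pose Ex x := fhat x - G *m feig x.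
have Exe : forall x i, Ex x i ord0 = ei i x by move=> x i; rewrite !mxE.
have eqW : forall x, W *m fhat x - y x = W *m Ex x + (Ws *m feig x - y x).
  move=> x; rewrite /W /Ex mulmxBr -(mulmxA _ (invmx G)) mulmxA.
  rewrite (mulmxA (Ws *m invmx G)) -(mulmxA Ws) mulVmx // mulmx1 addrA subrK //.
have pt : forall x, sqnorm (W *m fhat x - y x) <=
    2 * (3 * B ^+ 2 * \sum_i ei i x ^+ 2) + 2 * sqnorm (Ws *m feig x - y x).
  move=> x; rewrite eqW.
  apply: le_trans (sqnorm_add (a := W *m Ex x) (b := Ws *m feig x - y x) _) _.
    by move=> i; rewrite mxE.
  have sE : sqnorm (Ex x) = \sum_i ei i x ^+ 2.
    by apply: eq_bigr => i _; rewrite Exe.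
  have h1 := sqnorm_mul W (Ex x).
  have h2 : frob2 W <= 3 * B ^+ 2 by apply: le_trans FW _; lra.
  have h3 := sqnorm_ge0 (Ex x).
  have h4 : frob2 W * sqnorm (Ex x) <= 3 * B ^+ 2 * sqnorm (Ex x).
    by apply: ler_wpM2r.
  rewrite -sE; lra.
have IL := Lres W fhat Lfh.
have IR := Lres Ws feig Lfe.
have Eub := Exp_le IL (IntD (IntZ 2 (IntZ (3 * B ^+ 2) IntSe)) (IntZ 2 IR)) pt.
rewrite ExpD in Eub; try by repeat apply: IntZ; first [exact: IntSe | exact: IR].
rewrite !ExpZ in Eub; try by repeat apply: IntZ; first [exact: IntSe | exact: IR].
rewrite -/Se in Eub.
apply: le_trans Eub _.
have h5 : B ^+ 2 * Se <= B ^+ 2 * (m%:R * eps) by apply: ler_wpM2l.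
have h6 : 0 <= B ^+ 2 * m%:R * dl.
  by apply: mulr_ge0 => //; apply: mulr_ge0 => //; exact: ler0n.
have h7 : B ^+ 2 * m%:R * (eps + dl) = B ^+ 2 * (m%:R * eps) + B ^+ 2 * m%:R * dl.
  by ring.
have h8 : 0 <= B ^+ 2 * Se by apply: mulr_ge0.
rewrite h7; lra.
Qed.
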